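(* For each $c>0$ let $\alpha_c,\beta_c,\gamma:\mathbb{R}^n\times\mathbb{S}^m\to\mathbb{R}$ satisfy: (a) $\alpha_c,\beta_c,\gamma$ are continuously differentiable for all $c>0$; (b) $\alpha_c(x,\Lambda)>0$ for all $x$ feasible for (NSDP), all $\Lambda\in\mathbb{S}^m$ and all $c>0$; and, for every KKT pair $(\bar x,\bar\Lambda)$ of (NSDP): (c) $\alpha_c(\bar x,\bar\Lambda)\beta_c(\bar x,\bar\Lambda)=1$ for all $c>0$; (d) $\gamma(\bar x,\bar\Lambda)=0$, $\nabla_x\gamma(\bar x,\bar\Lambda)=0$ and $\nabla_\Lambda\gamma(\bar x,\bar\Lambda)=0$; (e) there exist neighborhoods $V_{\bar x}$ of $\bar x$ and $V_{\bar\Lambda}$ of $\bar\Lambda$ and a continuous function $\Gamma:V_{\bar x}\to V_{\bar\Lambda}$ with $\Gamma(\bar x)=\bar\Lambda$ and $\gamma(x,\Gamma(x))=0$ for all $x\in V_{\bar x}$. Define $$\mathcal{A}_c(x,\Lambda):=f(x)+\alpha_c(x,\Lambda)\,\varphi\big(G(x),\beta_c(x,\Lambda)\Lambda\big)+\gamma(x,\Lambda),\qquad \varphi(Y,Z)=\Big\|P\Big(\tfrac Z2-Y\Big)\Big\|_F^2-\tfrac{\|Z\|_F^2}{4}.$$ If $(x,\Lambda)\in\mathbb{R}^n\times\mathbb{S}^m$ is a KKT pair of (NSDP), then for all $c>0$, $(x,\Lambda)$ is a stationary point of $\mathcal{A}_c$ (i.e. $\nabla_x\mathcal{A}_c(x,\Lambda)=0$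 and $\nabla_\Lambda\mathcal{A}_c(x,\Lambda)=0$) and $\mathcal{A}_c(x,\Lambda)=f(x)$.
   Context: $\mathbb{S}^m$ is the space of real symmetric $m\times m$ matrices with inner product $\langle Y,Z\rangle=\operatorname{tr}(YZ)$ and Frobenius norm $\|\cdot\|_F$; $\mathbb{S}^m_+$ is the positive semidefinite cone and $P$ the orthogonal projection onto $\mathbb{S}^m_+$. $f:\mathbb{R}^n\to\mathbb{R}$ and $G:\mathbb{R}^n\to\mathbb{S}^m$ are twice continuously differentiable; (NSDP) is: minimize $f(x)$ subject to $G(x)\in\mathbb{S}^m_+$. For $x\in\mathbb{R}^n$, $\nabla G(x)v=\sum_i v_i\,\partial G(x)/\partial x_i$ and its adjoint is $\nabla G(x)^*Z=(\langle \partial G(x)/\partial x_i,Z\rangle)_{i=1}^n$. The Lagrangian is $L(x,\Lambda)=f(x)-\langle G(x),\Lambda\rangle$, so $\nabla_xL(x,\Lambda)=\nabla f(x)-\nabla G(x)^*\Lambda$. With the Jordan product $Y\circ Z=(YZ+ZY)/2$, a pair $(x,\Lambda)$ is a KKT pair of (NSDP) if $\nabla_xL(x,\Lambda)=0$, $\Lambda\circ G(x)=0$, $G(x)\in\mathbb{S}^m_+$ and $\Lambda\in\mathbb{S}^m_+$. *)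

(* Defs.v *)
(* R : realType, R^n = 'rV[R]_n,
   S^m = symmetric matrices inside 'M[R]_m. *)
From mathcomp Require Import all_boot all_order all_algebra.
From mathcomp Require Import all_classical all_reals all_analysis.
Set Implicit Arguments. Unset Strict Implicit. Unset Printing Implicit Defensive.
Import Order.TTheory GRing.Theory Num.Theory.
Import numFieldNormedType.Exports.
Local Open Scope ring_scope.
Local Open Scope classical_set_scope.

Definition symmx (R : realType) (m : nat) (Y : 'M[R]_m) : Prop := Y^T = Y.

Definition psdmx (R : realType) (m : nat) (Y : 'M[R]_m) : Prop :=
  Y^T = Y /\ forall v : 'rV[R]_m, 0 <= (v *m Y *m v^T) 0 0.

Definition frob (R : realType) (m : nat) (Y : 'M[R]_m) : R :=
  Num.sqrt (\sum_(i < m) \sum_(j < m) Y i j ^+ 2).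

Definition is_psd_proj (R : realType) (m : nat) (X Y : 'M[R]_m) : Prop :=
  psdmx Y /\ forall Z : 'M[R]_m, psdmx Z -> frob (X - Y) <= frob (X - Z).

Definition psd_proj (R : realType) (m : nat) (X : 'M[R]_m) : 'M[R]_m :=
  xget 0 [set Y | is_psd_proj X Y].

Definition phi (R : realType) (m : nat) (Y Z : 'M[R]_m) : R :=
  frob (psd_proj (2^-1 *: Z - Y)) ^+ 2 - frob Z ^+ 2 / 4.

Definition jordan (R : realType) (m : nat) (Y Z : 'M[R]_m) : 'M[R]_m :=
  2^-1 *: (Y *m Z + Z *m Y).

Definition evec (R : realType) (n : nat) (i : 'I_n) : 'rV[R]_n := delta_mx 0 i.

Definition gradf (R : realType) (n : nat) (f : 'rV[R]_n -> R) (x : 'rV[R]_n)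
  : 'rV[R]_n := \row_i ('d f x (evec R i)).

Definition DG_adj (R : realType) (n m : nat) (G : 'rV[R]_n -> 'M[R]_m)
  (x : 'rV[R]_n) (Z : 'M[R]_m) : 'rV[R]_n :=
  \row_i \tr ('d G x (evec R i) *m Z).

Definition gradL (R : realType) (n m : nat) (f : 'rV[R]_n -> R)
  (G : 'rV[R]_n -> 'M[R]_m) (x : 'rV[R]_n) (L : 'M[R]_m) : 'rV[R]_n :=
  gradf f x - DG_adj G x L.

Definition KKT (R : realType) (n m : nat) (f : 'rV[R]_n -> R)
  (G : 'rV[R]_n -> 'M[R]_m) (x : 'rV[R]_n) (L : 'M[R]_m) : Prop :=
  gradL f G x L = 0 /\ jordan L (G x) = 0 /\ psdmx (G x) /\ psdmx L.

Definition C1 (R : realType) (U V : normedModType R) (g : U -> V) : Prop :=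
  (forall p, differentiable g p) /\ (forall v : U, continuous (fun p => 'd g p v)).

Definition C2 (R : realType) (U V : normedModType R) (g : U -> V) : Prop :=
  (forall p, differentiable g p) /\ (forall v : U, C1 (fun p => 'd g p v)).

Definition Acal (R : realType) (n m : nat) (f : 'rV[R]_n -> R)
  (G : 'rV[R]_n -> 'M[R]_m) (al be : R -> 'rV[R]_n * 'M[R]_m -> R)
  (ga : 'rV[R]_n * 'M[R]_m -> R) (c : R) (p : 'rV[R]_n * 'M[R]_m) : R :=
  f p.1 + al c p * phi (G p.1) (be c p *: p.2) + ga p.

(* Main.v *)
Require Import Defs.
From HB Require Import structures.
From mathcomp Require Import all_boot all_order all_algebra.
From mathcomp Require Import all_classical all_reals all_analysis.
From mathcomp Require Import ring lra.
Set Implicit Arguments. Unset Strict Implicit. Unset Printing Implicit Defensive.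
Import Order.TTheory GRing.Theory Num.Theory.
Import numFieldNormedType.Exports.
Local Open Scope ring_scope.
Local Open Scope classical_set_scope.

Section Alg.
Variables (R : realType) (m : nat).
Implicit Types A B C Y Z X : 'M[R]_m.

Definition ip A B : R := \sum_(i < m) \sum_(j < m) A i j * B i j.
Definition sq A : R := ip A A.

Lemma ipC A B : ip A B = ip B A.
Proof. by apply: eq_bigr => i _; apply: eq_bigr => j _; rewrite mulrC. Qed.

Lemma ipDr A B C : ip A (B + C) = ip A B + ip A C.
Proof.
rewrite /ip -big_split; apply: eq_bigr => i _; rewrite -big_split.
by apply: eq_bigr => j _; rewrite mxE mulrDr.
Qed.

Lemma ipZr A k B : ip A (k *: B) = k * ip A B.
Proof.
rewrite /ip mulr_sumr; apply: eq_bigr => i _; rewrite mulr_sumr.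
by apply: eq_bigr => j _; rewrite mxE mulrCA.
Qed.

Lemma ipNr A B : ip A (- B) = - ip A B.
Proof. by rewrite -scaleN1r ipZr mulN1r. Qed.

Lemma ipBr A B C : ip A (B - C) = ip A B - ip A C.
Proof. by rewrite ipDr ipNr. Qed.

Lemma ipDl A B C : ip (B + C) A = ip B A + ip C A.
Proof. by rewrite ipC ipDr ![ip A _]ipC. Qed.
Lemma ipZl A k B : ip (k *: B) A = k * ip B A.
Proof. by rewrite ipC ipZr ipC. Qed.
Lemma ipNl A B : ip (- B) A = - ip B A.
Proof. by rewrite ipC ipNr ipC. Qed.
Lemma ipBl A B C : ip (B - C) A = ip B A - ip C A.
Proof. by rewrite ipDl ipNl. Qed.
Lemma ip0r A : ip A 0 = 0.
Proof. by rewrite -(scale0r 0) ipZr mul0r. Qed.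
Lemma ip0l A : ip 0 A = 0.
Proof. by rewrite ipC ip0r. Qed.

Lemma sq_ge0 A : 0 <= sq A.
Proof. by apply: sumr_ge0 => i _; apply: sumr_ge0 => j _; rewrite -expr2 sqr_ge0. Qed.

Lemma sqD A B : sq (A + B) = sq A + 2 * ip A B + sq B.
Proof. rewrite /sq ipDl !ipDr [ip B A]ipC; ring. Qed.

Lemma sqB A B : sq (A - B) = sq A - 2 * ip A B + sq B.
Proof. rewrite /sq ipBl !ipBr [ip B A]ipC; ring. Qed.

Lemma sqZ k A : sq (k *: A) = k ^+ 2 * sq A.
Proof. rewrite /sq ipZl ipZr; ring. Qed.

Lemma sqN A : sq (- A) = sq A.
Proof. by rewrite /sq ipNl ipNr opprK. Qed.

Lemma entry_le_sq A i j : A i j ^+ 2 <= sq A.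
Proof.
rewrite /sq /ip (bigD1 i) //= (bigD1 j) //= -expr2 -addrA lerDl.
apply: addr_ge0; first by apply: sumr_ge0 => k _; rewrite -expr2 sqr_ge0.
by apply: sumr_ge0 => k _; apply: sumr_ge0 => l _; rewrite -expr2 sqr_ge0.
Qed.

Lemma sq_eq0 A : sq A = 0 -> A = 0.
Proof.
move=> h; apply/matrixP => i j; rewrite mxE.
have h2 := entry_le_sq A i j; rewrite h in h2.
by apply/eqP; rewrite -sqrf_eq0 eq_le h2 sqr_ge0.
Qed.

Lemma frob_sq A : frob A ^+ 2 = sq A.
Proof.
rewrite /frob sqr_sqrtr; last exact: sq_ge0.
by apply: eq_bigr => i _; apply: eq_bigr => j _; rewrite expr2.
Qed.

Lemma frobE A : frob A = Num.sqrt (sq A).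
Proof. by rewrite /frob; congr Num.sqrt; apply: eq_bigr => i _; apply: eq_bigr => j _; rewrite expr2. Qed.

Lemma frob_le A B : (frob A <= frob B) = (sq A <= sq B).
Proof. by rewrite !frobE ler_sqrt // sq_ge0. Qed.

Lemma ip_tr A B : ip A B = \tr (A *m B^T).
Proof.
rewrite /mxtrace; apply: eq_bigr => i _; rewrite mxE.
by apply: eq_bigr => j _; rewrite mxE.
Qed.

End Alg.
Lemma quad_cs (R : realType) (a b c : R) : 0 <= c ->
  (forall t, 0 <= a + 2 * t * b + t ^+ 2 * c) -> b ^+ 2 <= a * c.
Proof.
move=> c0 h; have [cpos|] := ltP 0 c.
  have := h (- b / c).
  have -> : a + 2 * (- b / c) * b + (- b / c) ^+ 2 * c = (a * c - b ^+ 2) / c.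
    by field; rewrite gt_eqF.
  by rewrite pmulr_lge0 ?invr_gt0 // subr_ge0.
move=> cle; have c00 : c = 0 by apply/eqP; rewrite eq_le cle c0.
have [b0|bn0] := eqVneq b 0; first by rewrite b0 c00 expr0n /= mulr0.
have := h (- (a + 1) / (2 * b)).
have -> : a + 2 * (- (a + 1) / (2 * b)) * b + (- (a + 1) / (2 * b)) ^+ 2 * c = -1.
  by rewrite c00 mulr0 addr0; field.
by rewrite lerNr oppr0 ler10.
Qed.

Section PSD.
Variables (R : realType) (m : nat).
Implicit Types A B C Y Z X G : 'M[R]_m.
Implicit Types v w u : 'rV[R]_m.

Definition bf Z v w : R := (v *m Z *m w^T) 0 0.

Lemma bf_sym Z v w : Z^T = Z -> bf Z v w = bf Z w v.
Proof.
move=> sZ; rewrite /bf.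
have h : forall M : 'M[R]_1, M 0 0 = M^T 0 0 by move=> M; rewrite mxE.
rewrite h.
by rewrite !trmx_mul trmxK sZ mulmxA.
Qed.

Lemma bfDZl Z v w u t : bf Z (v + t *: w) u = bf Z v u + t * bf Z w u.
Proof. by rewrite /bf !mulmxDl -!scalemxAl !mxE. Qed.

Lemma bf_delta Z i j : bf Z (delta_mx 0 i) (delta_mx 0 j) = Z i j.
Proof.
by rewrite /bf -rowE trmx_delta -colE !mxE.
Qed.

Lemma psd_cs Z v w : psdmx Z -> bf Z v w ^+ 2 <= bf Z v v * bf Z w w.
Proof.
move=> [sZ hZ]; apply: quad_cs; first exact: hZ.
move=> t; have := hZ (v + t *: w).
rewrite -/(bf Z _ _) bfDZl.
rewrite /bf [X in _ <= X -> _]/= .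
have e : forall x, (x *m Z *m (v + t *: w)^T) 0 0 = bf Z x v + t * bf Z x w.
  move=> x; rewrite (bf_sym x v sZ) (bf_sym x w sZ) -bfDZl bf_sym //.
rewrite !e (bf_sym w v sZ) => h.
apply: le_trans h _; rewrite le_eqVlt; apply/orP; left; apply/eqP.
rewrite /bf; ring.
Qed.

Lemma psd_diag_ge0 Z i : psdmx Z -> 0 <= Z i i.
Proof. by move=> [_ h]; rewrite -bf_delta; apply: h. Qed.

Lemma psd_offdiag Z i j : psdmx Z -> Z i j ^+ 2 <= Z i i * Z j j.
Proof. by move=> pZ; rewrite -!bf_delta; apply: psd_cs. Qed.

Lemma psd_zero_diag Z i j : psdmx Z -> Z i i = 0 -> Z i j = 0.
Proof.
move=> pZ h; have := psd_offdiag i j pZ; rewrite h mul0r => h2.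
by apply/eqP; rewrite -sqrf_eq0 eq_le h2 sqr_ge0.
Qed.

Lemma ip_rank1 G u : G^T = G -> ip G (u^T *m u) = bf G u u.
Proof.
move=> _; rewrite /ip /bf mxE.
under eq_bigr => i _ do under eq_bigr => j _ do rewrite mxE big_ord1 !mxE.
under [RHS]eq_bigr => j _ do rewrite !mxE mulr_suml.
rewrite exchange_big; apply: eq_bigr => i _; apply: eq_bigr => j _; ring.
Qed.

End PSD.
Local Close Scope classical_set_scope.
Section PSD2.
Variables (R : realType) (m : nat).
Implicit Types A B C Y Z X G : 'M[R]_m.
Implicit Types v w u : 'rV[R]_m.

Lemma sym_entry Z i j : Z^T = Z -> Z j i = Z i j.
Proof. by move=> sZ; rewrite -[in LHS]sZ mxE. Qed.

Lemma psd_diag0 Z : psdmx Z -> (forall i, Z i i = 0) -> Z = 0.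
Proof.
move=> pZ h; apply/matrixP => i j; rewrite mxE; exact: psd_zero_diag.
Qed.

Lemma rank1E u j l : (u^T *m u) j l = u 0 j * u 0 l.
Proof. by rewrite mxE big_ord1 !mxE. Qed.

Lemma mx11_mul (a b : 'M[R]_1) : (a *m b) 0 0 = a 0 0 * b 0 0.
Proof. by rewrite mxE big_ord1. Qed.

Lemma bfBZ Z M v k : bf (Z - k *: M) v v = bf Z v v - k * bf M v v.
Proof. by rewrite /bf mulmxBr mulmxBl -scalemxAr -scalemxAl !mxE. Qed.

Lemma bf_rank1 u v : bf (u^T *m u) v v = ((v *m u^T) 0 0) ^+ 2.
Proof.
rewrite /bf !mulmxA -(mulmxA (v *m u^T)) mx11_mul expr2; congr (_ * _).
have h : forall M : 'M[R]_1, M 0 0 = M^T 0 0 by move=> M; rewrite mxE.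
by rewrite h trmx_mul trmxK.
Qed.

Lemma ip_psd_ge0 G Z : psdmx G -> psdmx Z -> 0 <= ip G Z.
Proof.
move=> pG.
move: {2}#|[set i | Z i i != 0]| (leqnn #|[set i | Z i i != 0]|) => k.
elim: k Z => [|k IH] Z hk pZ.
  have E : [set i | Z i i != 0] = finset.set0 by apply/eqP; rewrite -cards_eq0 -leqn0.
  rewrite (psd_diag0 pZ) ?ip0r // => i.
  have : (i \in [set i | Z i i != 0]) = (i \in finset.set0) by rewrite E.
  by rewrite !inE => /negbFE/eqP.
case: (pickP [pred i | Z i i != 0]) => [i /= hi | none]; last first.
  by rewrite (psd_diag0 pZ) ?ip0r // => i; have := none i => /= /negbFE/eqP.
have a0 : 0 < Z i i by rewrite lt_neqAle eq_sym hi psd_diag_ge0.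
set a := Z i i in a0 hi.
set u := row i Z.
set Z' := Z - a^-1 *: (u^T *m u).
have sZ : Z^T = Z by case: pZ.
have uE : forall j, u 0 j = Z i j by move=> j; rewrite mxE.
have Z'E : forall j l, Z' j l = Z j l - a^-1 * (Z i j * Z i l).
  by move=> j l; rewrite !mxE big_ord1 !mxE.
have pZ' : psdmx Z'.
  split.
    by apply/matrixP => j l; rewrite mxE !Z'E (sym_entry _ _ sZ); ring.
  move=> v; rewrite -/(bf Z' v v) bfBZ bf_rank1.
  have -> : (v *m u^T) 0 0 = bf Z v (delta_mx 0 i).
    by rewrite /bf /u rowE trmx_mul sZ mulmxA.
  have cs := psd_cs v (delta_mx 0 i) pZ; rewrite bf_delta -/a in cs.
  rewrite subr_ge0 ler_pdivrMl // mulrC; exact: cs.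
have -> : Z = Z' + a^-1 *: (u^T *m u) by rewrite /Z' subrK.
rewrite ipDr ipZr ip_rank1; last by case: pG.
apply: addr_ge0; last first.
  by apply: mulr_ge0; [rewrite invr_ge0 ltW | case: pG => _; apply].
apply: IH pZ'.
have sub : [set j | Z' j j != 0] \subset [set j | Z j j != 0] :\ i.
  apply/fintype.subsetP => j; rewrite !inE Z'E => hj; apply/andP; split.
    apply: contraNneq hj => ->; rewrite -/a.
    by rewrite mulrA mulVf // mul1r subrr.
  apply: contraNneq hj => hz.
  have hij : Z i j = 0 by rewrite (sym_entry _ _ sZ) (psd_zero_diag i pZ hz).
  by rewrite hz hij mul0r mulr0 subr0.
apply: leq_trans (subset_leq_card sub) _.
move: hk; rewrite (cardsD1 i) inE hi /=; by [].
Qed.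

End PSD2.
Local Open Scope classical_set_scope.
Lemma vi_real (R : realType) (s S : R) : 0 <= S ->
  (forall t, 0 < t -> t <= 1 -> 2 * t * s <= t ^+ 2 * S) -> s <= 0.
Proof.
move=> S0 h; rewrite leNgt; apply/negP => s0.
have SS : 0 < S + s by rewrite ltr_wpDl.
set t := s / (S + s).
have t0 : 0 < t by rewrite divr_gt0.
have tE : t * (S + s) = s by rewrite /t divfK // gt_eqF.
have t1 : t <= 1 by rewrite /t ler_pdivrMr // mul1r lerDr.
have := h t t0 t1 => h2.
nra.
Qed.

Section Proj.
Variables (R : realType) (m : nat).
Implicit Types A B C Y Z X G : 'M[R]_m.
Implicit Types v w u : 'rV[R]_m.

Lemma bfD A B v : bf (A + B) v v = bf A v v + bf B v v.
Proof. by rewrite /bf mulmxDr mulmxDl !mxE. Qed.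
Lemma bfZ k A v : bf (k *: A) v v = k * bf A v v.
Proof. by rewrite /bf -scalemxAr -scalemxAl !mxE. Qed.

Lemma psd0 : psdmx (0 : 'M[R]_m).
Proof. by split; [rewrite trmx0 | move=> v; rewrite mulmx0 mul0mx mxE]. Qed.

Lemma psdD A B : psdmx A -> psdmx B -> psdmx (A + B).
Proof.
move=> [sA hA] [sB hB]; split; first by rewrite linearD /= sA sB.
by move=> v; rewrite -/(bf _ v v) bfD addr_ge0 //; [apply: hA|apply: hB].
Qed.

Lemma psdZ k A : 0 <= k -> psdmx A -> psdmx (k *: A).
Proof.
move=> k0 [sA hA]; split; first by rewrite linearZ /= sA.
by move=> v; rewrite -/(bf _ v v) bfZ mulr_ge0 //; apply: hA.
Qed.

Lemma psd_seg Y Z t : psdmx Y -> psdmx Z -> 0 <= t <= 1 ->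
  psdmx (Y + t *: (Z - Y)).
Proof.
move=> pY pZ /andP[t0 t1].
have -> : Y + t *: (Z - Y) = (1 - t) *: Y + t *: Z.
  by apply/matrixP => i j; rewrite !mxE; ring.
by apply: psdD; apply: psdZ => //; rewrite subr_ge0.
Qed.

Lemma proj_sq X Y Z : is_psd_proj X Y -> psdmx Z -> sq (X - Y) <= sq (X - Z).
Proof. by move=> [_ h] pZ; rewrite -frob_le; apply: h. Qed.

Lemma proj_vi X Y Z : is_psd_proj X Y -> psdmx Z -> ip (X - Y) (Z - Y) <= 0.
Proof.
move=> hP pZ; apply: (vi_real (sq_ge0 (Z - Y))) => t t0 t1.
have := proj_sq hP (psd_seg (proj1 hP) pZ (Z := Z) (t := t) _).
rewrite t1 ltW // => /(_ isT).
have -> : X - (Y + t *: (Z - Y)) = (X - Y) - t *: (Z - Y) by apply/matrixP => i j; rewrite !mxE; ring.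
rewrite [sq (_ - t *: _)]sqB sqZ ipZr; lra.
Qed.

Lemma proj_orth X Y : is_psd_proj X Y -> ip (X - Y) Y = 0.
Proof.
move=> hP; have h1 := proj_vi hP psd0.
have h2 := proj_vi hP (psdZ (k := 2) (ler0n _ 2) (proj1 hP)).
rewrite sub0r ipNr oppr_le0 in h1.
have e : 2 *: Y - Y = Y by rewrite scalerDl scale1r addrK.
rewrite e in h2; apply/eqP; rewrite eq_le h2 h1 //.
Qed.

Lemma proj_uniq X Y1 Y2 : is_psd_proj X Y1 -> is_psd_proj X Y2 -> Y1 = Y2.
Proof.
move=> h1 h2; have v1 := proj_vi h1 (proj1 h2); have v2 := proj_vi h2 (proj1 h1).
have : sq (Y1 - Y2) <= 0.
  have -> : sq (Y1 - Y2) = ip (X - Y1) (Y2 - Y1) + ip (X - Y2) (Y1 - Y2).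
    rewrite /sq !ipBl !ipBr [ip Y2 Y1]ipC; ring.
  by rewrite -[leRHS](addr0 0) lerD.
move=> h; apply/eqP; rewrite -subr_eq0; apply/eqP/sq_eq0.
by apply/eqP; rewrite eq_le h sq_ge0.
Qed.

Lemma proj_firm X X' Y Y' : is_psd_proj X Y -> is_psd_proj X' Y' ->
  sq ((X - Y) - (X' - Y')) <= sq (X - X').
Proof.
move=> h h'; have v1 := proj_vi h (proj1 h'); have v2 := proj_vi h' (proj1 h).
have -> : (X - Y) - (X' - Y') = (X - X') - (Y - Y').
  by apply/matrixP => i j; rewrite !mxE; ring.
rewrite sqB.
suff : sq (Y - Y') <= ip (X - X') (Y - Y') by move=> hh; have := sq_ge0 (Y - Y'); lra.
have -> : sq (Y - Y') = ip (X - X') (Y - Y') + (ip (X - Y) (Y' - Y) + ip (X' - Y') (Y - Y')).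
  rewrite /sq !ipBl !ipBr [ip Y' Y]ipC; ring.
by rewrite gerDl -[leRHS](addr0 0) lerD.
Qed.

Lemma proj_hq X Y : is_psd_proj X Y -> sq X = sq (X - Y) + sq Y.
Proof.
move=> h; have := proj_orth h.
have -> : sq X = sq ((X - Y) + Y) by rewrite subrK.
rewrite sqD => ->; ring.
Qed.

End Proj.
Section Exist.
Variables (R : realType) (m : nat).
Implicit Types A B C Y Z X G : 'M[R]_m.

Lemma cont_sum (T : topologicalType) n (F : 'I_n -> T -> R) :
  (forall i, continuous (F i)) -> continuous (fun x => \sum_(i < n) F i x).
Proof.
move=> h; have -> : (fun x => \sum_(i < n) F i x) = \sum_(i < n) F i.
  by apply/funext => x; rewrite fct_sumE.
elim/big_ind: _ => //; first exact: cst_continuous.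
by move=> f g hf hg x; apply: continuousD; [apply: hf | apply: hg].
Qed.

Definition Mof (w : 'rV[R]_(m * m)) : 'M[R]_m :=
  \matrix_(i, j) w 0 (mxvec_index i j).

Lemma Mof_vec Z : Mof (mxvec Z) = Z.
Proof. by apply/matrixP => i j; rewrite mxE mxvecE. Qed.

Lemma Mof0 : Mof 0 = 0.
Proof. by apply/matrixP => i j; rewrite !mxE. Qed.

Lemma cont_coord k : continuous (fun w : 'rV[R]_(m * m) => w 0 k).
Proof. exact: coord_continuous. Qed.

Lemma cont_Mof_entry i j : continuous (fun w => Mof w i j).
Proof.
have -> : (fun w => Mof w i j) = (fun w : 'rV[R]_(m * m) => w 0 (mxvec_index i j)).
  by apply/funext => w; rewrite mxE.
exact: cont_coord.
Qed.

Lemma cont_bf (v : 'rV[R]_m) : continuous (fun w => bf (Mof w) v v).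
Proof.
have -> : (fun w => bf (Mof w) v v) =
  (fun w => \sum_(j < m) (\sum_(i < m) v 0 i * Mof w i j) * v 0 j).
  by apply/funext => w; rewrite /bf mxE; apply: eq_bigr => j _; rewrite !mxE.
apply: cont_sum => j x; apply: continuousM; last exact: cst_continuous.
apply: (cont_sum (F := fun i w => v 0 i * Mof w i j)) => i y.
apply: continuousM; [exact: cst_continuous | exact: cont_Mof_entry].
Qed.

Lemma cont_phi X : continuous (fun w => sq (X - Mof w)).
Proof.
apply: (cont_sum (F := fun i w => \sum_(j < m) (X - Mof w) i j * (X - Mof w) i j)).
move=> i; apply: (cont_sum (F := fun j w => (X - Mof w) i j * (X - Mof w) i j)).
move=> j x.
have -> : (fun w => (X - Mof w) i j * (X - Mof w) i j) =
  (fun w => (X i j - Mof w i j)) \* (fun w => (X i j - Mof w i j)).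
  by apply/funext => w; rewrite /= !mxE.
apply: continuousM; apply: continuousB; (exact: cst_continuous || exact: cont_Mof_entry).
Qed.

Lemma closed_psd : closed [set w : 'rV[R]_(m * m) | psdmx (Mof w)].
Proof.
have -> : [set w : 'rV[R]_(m * m) | psdmx (Mof w)] =
  (\bigcap_(p in [set: 'I_m * 'I_m])
     ((fun w => Mof w p.2 p.1 - Mof w p.1 p.2) @^-1` [set 0])) `&`
  (\bigcap_(v in [set: 'rV[R]_m]) ((fun w => bf (Mof w) v v) @^-1` [set x | 0 <= x])).
  apply/seteqP; split => w /=.
    move=> [sw hw]; split.
      by move=> [i j] _ /=; rewrite -[in Mof w j i]sw mxE subrr.
    by move=> v _; apply: hw.
  move=> [h1 h2]; split; last by move=> v; apply: (h2 v).
  apply/matrixP => i j; rewrite mxE; apply/eqP; rewrite -subr_eq0.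
  by apply/eqP; apply: (h1 (i, j)).
apply: closedI; apply: closed_bigI.
  move=> [i j] _; apply: (continuous_closedP _).1; last exact: closed_eq.
  by move=> x; apply: continuousB; apply: cont_Mof_entry.
move=> v _; by apply: (continuous_closedP _).1; [exact: cont_bf | exact: closed_ge].
Qed.

Lemma proj_exists X : exists Y, is_psd_proj X Y.
Proof.
set S := sq X; set B := 2 * (S + 1).
set Box := [set w : 'rV[R]_(m * m) | forall k, `[- B, B]%classic (w ord0 k)].
set A := Box `&` [set w | psdmx (Mof w)].
have cA : compact A.
  apply: compact_closedI; last exact: closed_psd.
  by apply: (rV_compact (A := fun _ => `[- B, B]%classic)) => _; exact: segment_compact.
have A0 : A 0.
  split; last by rewrite /= Mof0; exact: psd0.
  move=> k /=; rewrite mxE in_itv /= oppr_le0 andbb.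
  by rewrite /B mulr_ge0 // addr_ge0 // sq_ge0.
have cphi := @cont_phi X.
have [c cA' cmin] := compact_EVT_min (ex_intro _ 0 A0) cA
  (continuous_subspaceT cphi).
rewrite inE in cA'; exists (Mof c); split; first by case: cA'.
move=> Z pZ; rewrite frob_le.
have [inbox|notbox] := pselect (Box (mxvec Z)).
  by rewrite -(Mof_vec Z); apply: cmin; rewrite inE; split => //; rewrite /= Mof_vec.
have c0 : sq (X - Mof c) <= S by have := cmin 0; rewrite inE Mof0 subr0 => /(_ A0).
apply: (le_trans c0).
move/existsNP: notbox => [k]; case/mxvec_indexP: k => i j.
rewrite mxvecE /= in_itv /= => hz.
have hx := entry_le_sq X i j.
have := entry_le_sq (X - Z) i j; rewrite !mxE.
set x := X i j in hx *; set z := Z i j in hz *.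
rewrite -/S in hx.
have S0 : 0 <= S by exact: sq_ge0.
have xb1 : x <= S + 1.
  have [x1|x1] := leP x 1; first lra.
  nra.
have xb2 : - (S + 1) <= x.
  have [x1|x1] := leP (- 1) x; first lra.
  nra.
move=> hxz; apply: le_trans hxz.
have : z < - B \/ B < z.
  move/negP: hz; rewrite negb_and -!ltNge => /orP[h|h]; [by left|by right].
rewrite /B => -[h|h]; nra.
Qed.

End Exist.
Lemma hq_real (R : realType) (sX a sP sDX b sP' sD iXD iPD iQ iQ' sQ : R) :
  sX = a + sP -> sDX = b + sP' -> sDX = sX + 2 * iXD + sD -> iQ = iXD - iPD ->
  b <= a + 2 * iQ + sD -> a <= b - 2 * iQ' + sD -> sQ <= sD ->
  0 <= sQ + 2 * (iQ' - iQ) + sD -> 0 <= sD ->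
  `|sP' - (sP + 2 * iPD)| <= 4 * sD.
Proof.
move=> e1 e2 e3 e4 u1 u2 fi cs s0.
rewrite ler_norml; apply/andP; split; lra.
Qed.

Section Hq.
Variables (R : realType) (m : nat).
Implicit Types A B C Y Z X G D : 'M[R]_m.

Lemma psd_projP X : is_psd_proj X (psd_proj X).
Proof. by apply: xgetPex; apply: proj_exists. Qed.

Definition hq X : R := sq (psd_proj X).

Lemma hq_bound X D :
  `| hq (D + X) - (hq X + 2 * ip (psd_proj X) D) | <= 4 * sq D.
Proof.
set P := psd_proj X; set P' := psd_proj (D + X).
have hP : is_psd_proj X P := psd_projP X.
have hP' : is_psd_proj (D + X) P' := psd_projP (D + X).
have e1 := proj_hq hP; have e2 := proj_hq hP'.
have u1 := proj_sq hP' (proj1 hP).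
have eA : sq (D + X - P) = sq (X - P) + 2 * ip (X - P) D + sq D.
  have -> : D + X - P = (X - P) + D by apply/matrixP => i j; rewrite !mxE; ring.
  by rewrite sqD.
rewrite eA in u1.
have u2 := proj_sq hP (proj1 hP').
have eB : sq (X - P') = sq (D + X - P') - 2 * ip (D + X - P') D + sq D.
  have -> : X - P' = (D + X - P') - D by apply/matrixP => i j; rewrite !mxE; ring.
  by rewrite sqB.
rewrite eB in u2.
have fi := proj_firm hP' hP.
have eC : D + X - X = D by apply/matrixP => i j; rewrite !mxE; ring.
rewrite eC in fi.
have s0 := sq_ge0 D.
have cs := sq_ge0 ((D + X - P' - (X - P)) + D).
rewrite sqD ipBl in cs.
rewrite /hq -/P -/P'.
have e3 : sq (D + X) = sq X + 2 * ip X D + sq D by rewrite addrC sqD.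
have e4 : ip (X - P) D = ip X D - ip P D by rewrite ipBl.
by apply: (hq_real e1 e2 e3 e4 u1 u2 fi cs s0).
Qed.

Lemma entry_le_norm D i j : `|D i j| <= `|D|.
Proof.
by rewrite [leRHS]/Num.norm /= mx_normrE; apply/bigmax_geP; right => /=; exists (i, j).
Qed.

Lemma sq_le_norm D : sq D <= (m * m)%:R * `|D| ^+ 2.
Proof.
rewrite /sq /ip.
have h : forall i j, D i j * D i j <= `|D| ^+ 2.
  move=> i j; rewrite -expr2 -real_normK ?num_real //.
  by rewrite lerXn2r ?nnegrE ?normr_ge0 // entry_le_norm.
have -> : (m * m)%:R * `|D| ^+ 2 = \sum_(i < m) \sum_(j < m) `|D| ^+ 2.
  by rewrite !sumr_const !card_ord -mulrnA mulr_natl.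
by apply: ler_sum => i _; apply: ler_sum => j _; apply: h.
Qed.

End Hq.
Section HqDiff.
Variables (R : realType) (m : nat).
Implicit Types A B C Y Z X G D : 'M[R]_m.

Definition ipl Y : 'M[R]_m -> R := fun D => 2 * ip Y D.

Lemma ipl_linear Y : linear (ipl Y).
Proof. by move=> a u v; rewrite /ipl ipDr ipZr mulrDr mulrCA. Qed.

Lemma ipl_cont Y : continuous (ipl Y).
Proof.
move=> x; apply: (@continuousM _ _ (cst 2) (fun D => ip Y D)).
  exact: cst_continuous.
apply: (cont_sum (F := fun i D => \sum_(j < m) Y i j * D i j)) => i.
apply: (cont_sum (F := fun j D => Y i j * D i j)) => j y.
by apply: continuousM; [exact: cst_continuous | exact: coord_continuous].
Qed.

Lemma diff_of_bound (g : 'M[R]_m -> R) X Y (C : R) : 0 <= C ->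
  (forall D, `| g (D + X) - (g X + 2 * ip Y D) | <= C * sq D) ->
  differentiable g X /\ 'd g X = ipl Y :> (_ -> _).
Proof.
move=> C0 hb.
pose gL : {linear 'M[R]_m -> R} :=
  HB.pack (ipl Y) (GRing.isLinear.Build _ _ _ _ _ (ipl_linear Y)).
have gc : continuous gL := @ipl_cont Y.
have hh : g \o shift X = cst (g X) + gL +o_ (0 : 'M[R]_m) id.
  apply/(@eqaddoP R _ R _ (nbhs (0 : 'M[R]_m))) => eps eps0.
  set K : R := C * (m * m)%:R + 1.
  have K0 : 0 < K by rewrite /K ltr_wpDl // mulr_ge0 // ler0n.
  apply/nbhs_ballP; exists (eps / K) => [|D]; first by rewrite /= divr_gt0.
  rewrite -ball_normE /= sub0r normrN => hD.
  apply: le_trans (hb D) _.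
  have := sq_le_norm D.
  rewrite ltr_pdivlMr // /K in hD.
  set n := `|D| in hD *; set M := (m * m)%:R in hD *.
  have n0 : 0 <= n by exact: normr_ge0.
  have M0 : 0 <= M by exact: ler0n.
  move=> hs.
  have h1 : C * sq D <= C * (M * n ^+ 2) by apply: ler_wpM2l.
  nra.
have dd := diff_unique gc hh.
split; last exact: dd.
by apply/diff_locallyP; rewrite dd; split.
Qed.

Lemma hq_diff X : differentiable (@hq R m) X /\
  'd (@hq R m) X = ipl (psd_proj X) :> (_ -> _).
Proof. by apply: (diff_of_bound (C := 4)) => //; apply: hq_bound. Qed.

Lemma sq_diff X : differentiable (@sq R m) X /\ 'd (@sq R m) X = ipl X :> (_ -> _).
Proof.
apply: (diff_of_bound (C := 1)) => // D.
rewrite sqD mul1r.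
have -> : sq D + 2 * ip D X + sq X - (sq X + 2 * ip X D) = sq D by rewrite ipC; ring.
by rewrite ger0_norm ?sq_ge0.
Qed.

End HqDiff.
Section Main.
Variables (R : realType) (n m : nat).
Local Notation V := ('rV[R]_n * 'M[R]_m)%type.

Lemma fst_lin : linear (@fst 'rV[R]_n 'M[R]_m).
Proof. by []. Qed.
Lemma snd_lin : linear (@snd 'rV[R]_n 'M[R]_m).
Proof. by []. Qed.

Definition fstL : {linear V -> 'rV[R]_n} := HB.pack (@fst _ _) (GRing.isLinear.Build _ _ _ _ _ fst_lin).
Definition sndL : {linear V -> 'M[R]_m} := HB.pack (@snd _ _) (GRing.isLinear.Build _ _ _ _ _ snd_lin).

Lemma fstL_cont : continuous fstL.
Proof. by move=> q; apply: cvg_fst. Qed.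
Lemma sndL_cont : continuous sndL.
Proof. by move=> q; apply: cvg_snd. Qed.

Lemma fst_diff (p : V) : differentiable (@fst _ _ : V -> 'rV[R]_n) p /\
  'd (@fst _ _ : V -> 'rV[R]_n) p = fst :> (V -> _).
Proof.
split; first exact: (linear_differentiable _ fstL_cont).
exact: (diff_lin _ fstL_cont).
Qed.

Lemma snd_diff (p : V) : differentiable (@snd _ _ : V -> 'M[R]_m) p /\
  'd (@snd _ _ : V -> 'M[R]_m) p = snd :> (V -> _).
Proof.
split; first exact: (linear_differentiable _ sndL_cont).
exact: (diff_lin _ sndL_cont).
Qed.

Lemma comp_fst_diff (W : normedModType R) (g : 'rV[R]_n -> W) (p : V) :
  differentiable g (p.1) ->
  differentiable (fun q : V => g q.1) p /\
  'd (fun q : V => g q.1) p = (fun q : V => 'd g (p.1) (q.1)) :> (V -> W).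
Proof.
move=> dg; have [d1 e1] := fst_diff p.
have -> : (fun q : V => g q.1) = g \o (@fst _ _ : V -> 'rV[R]_n) by [].
split; first exact: differentiable_comp.
by rewrite diff_comp // e1.
Qed.

Lemma scal_diff (b : V -> R) (p : V) : differentiable b p ->
  differentiable (fun q : V => b q *: q.2) p.
Proof.
move=> db.
have -> : (fun q : V => b q *: q.2) =
   \sum_(i < m) \sum_(j < m) (fun q : V => (b q * q.2 i j) *: (delta_mx i j : 'M[R]_m)).
  apply/funext => q; rewrite fct_sumE.
  rewrite {1}[q.2]matrix_sum_delta scaler_sumr; apply: eq_bigr => i _.
  rewrite fct_sumE scaler_sumr; apply: eq_bigr => j _.
  by rewrite scalerA.
apply: differentiable_sum => i; apply: differentiable_sum => j.
apply: differentiableZl; apply: differentiableM => //.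
have -> : (fun q : V => q.2 i j) = (fun M : 'M[R]_m => M i j) \o snd by [].
apply: differentiable_comp; first exact: (snd_diff p).1.
exact: differentiable_coord.
Qed.

End Main.
Lemma ip_sumr (R : realType) (m k : nat) (A : 'M[R]_m) (F : 'I_k -> 'M[R]_m) :
  ip A (\sum_(i < k) F i) = \sum_(i < k) ip A (F i).
Proof. exact: (big_morph (ip A) (ipDr A) (ip0r A)). Qed.

Lemma key_alg (R : realType) (m : nat) (Y dE dG L : 'M[R]_m) (b : R) :
  Y = b *: L ->
  ipl (2^-1 *: Y) (2^-1 *: dE - dG) - 4^-1 * ipl Y dE = - (b * ip L dG).
Proof. by move=> ->; rewrite /ipl ipBr !ipZl !ipZr; field. Qed.

Lemma fin_alg (R : realType) (a s g F A k dh ds hU sE4 sE al0 be0 dal k0 iLG : R) :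
  a = s + g -> s = F + A -> A = al0 * k + k0 * dal -> k = hU - sE4 -> hU = dh ->
  sE4 = 4^-1 * sE -> sE = ds -> dh - 4^-1 * ds = - (be0 * iLG) -> F = iLG ->
  k0 = 0 -> al0 * be0 = 1 -> g = 0 -> a = 0.
Proof.
move=> -> -> -> -> -> -> -> h -> -> hab ->.
have -> : al0 * (dh - 4^-1 * ds) = al0 * (- (be0 * iLG)) by rewrite h.
rewrite mulrN mulrA hab; ring.
Qed.

Lemma psd_ip_jordan (R : realType) (m : nat) (L Y : 'M[R]_m) :
  Y^T = Y -> jordan L Y = 0 -> ip L Y = 0.
Proof.
move=> sY hj; have := congr1 (@mxtrace _ _) hj.
rewrite /jordan mxtraceZ mxtraceD (mxtrace_mulC Y L) mxtrace0 => h.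
have h2 : \tr (L *m Y) = 0.
  apply/eqP; move/eqP: h; rewrite mulf_eq0 invr_eq0 pnatr_eq0 /=.
  by rewrite -mulr2n mulrn_eq0.
by rewrite ip_tr sY.
Qed.

Unset Implicit Arguments.
Theorem proposition3p5 (R : realType) (n m : nat)
  (f : 'rV[R]_n -> R) (G : 'rV[R]_n -> 'M[R]_m)
  (al be : R -> 'rV[R]_n * 'M[R]_m -> R) (ga : 'rV[R]_n * 'M[R]_m -> R) :
  C2 f -> C2 G -> (forall x, symmx (G x)) ->
  (* (a) *)
  (forall c, 0 < c -> C1 (al c) /\ C1 (be c)) -> C1 ga ->
  (* (b) *)
  (forall c x L, 0 < c -> psdmx (G x) -> symmx L -> 0 < al c (x, L)) ->
  (* (c), (d), (e) at every KKT pair *)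
  (forall xb Lb, KKT f G xb Lb ->
     (forall c, 0 < c -> al c (xb, Lb) * be c (xb, Lb) = 1) /\
     (ga (xb, Lb) = 0 /\
      (forall v : 'rV[R]_n, 'd ga (xb, Lb) (v, 0) = 0) /\
      (forall H : 'M[R]_m, symmx H -> 'd ga (xb, Lb) (0, H) = 0)) /\
     (exists (Vx : set 'rV[R]_n) (VL : set 'M[R]_m),
        nbhs xb Vx /\
        VL `<=` [set L | symmx L] /\
        (exists2 e : R, 0 < e &
           forall L, symmx L -> frob (L - Lb) < e -> VL L) /\
        exists Gam : 'rV[R]_n -> 'M[R]_m,
          Gam xb = Lb /\ {within Vx, continuous Gam} /\
          (forall x, Vx x -> VL (Gam x) /\ ga (x, Gam x) = 0))) ->
  forall (x : 'rV[R]_n) (L : 'M[R]_m), KKT f G x L ->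
  forall c : R, 0 < c ->
    differentiable (Acal f G al be ga c) (x, L) /\
    (forall v : 'rV[R]_n, 'd (Acal f G al be ga c) (x, L) (v, 0) = 0) /\
    (forall H : 'M[R]_m, symmx H -> 'd (Acal f G al be ga c) (x, L) (0, H) = 0) /\
    Acal f G al be ga c (x, L) = f x.
Proof.
move=> hf hG hsym ha hga hb hkkt x L hK c c0.
have [hab [[ga0 [gav gaH]] _]] := hkkt x L hK.
have [hgrad [hjor [pG pL]]] := hK.
pose p0 : 'rV[R]_n * 'M[R]_m := (x, L).
have al0 : 0 < al c p0 := hb c x L c0 pG (proj1 pL).
have be0 : 0 < be c p0.
  have := hab c c0; rewrite -/p0 => h.
  have : 0 < al c p0 * be c p0 by rewrite h.
  by rewrite pmulr_rgt0.
have [E E_def] : exists E : 'rV[R]_n * 'M[R]_m -> 'M[R]_m,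
  E = fun q => be c q *: q.2 by eexists.
have [GF GF_def] : exists GF : 'rV[R]_n * 'M[R]_m -> 'M[R]_m,
  GF = fun q => G q.1 by eexists.
have [F1 F1_def] : exists F1 : 'rV[R]_n * 'M[R]_m -> R,
  F1 = fun q => f q.1 by eexists.
have [E2 E2_def] : exists E2, E2 = 2^-1 *: E by eexists.
have [U U_def] : exists U, U = E2 - GF by eexists.
have [hU hU_def] : exists hU, hU = (@hq R m) \o U by eexists.
have [sE sE_def] : exists sE, sE = (@sq R m) \o E by eexists.
have [sE4 sE4_def] : exists sE4, sE4 = 4^-1 *: sE by eexists.
have [kphi kphi_def] : exists kphi, kphi = hU - sE4 by eexists.
have [Ak Ak_def] : exists Ak, Ak = al c * kphi by eexists.
have [S1 S1_def] : exists S1, S1 = F1 + Ak by eexists.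
have AcalE : Acal f G al be ga c = S1 + ga.
  apply/funext => q; rewrite /Acal /phi !frob_sq S1_def Ak_def kphi_def hU_def sE4_def.
  rewrite sE_def U_def E2_def E_def GF_def F1_def.
  by rewrite /hq !fctE /= [_ / 4]mulrC.
have U0 : U p0 = 2^-1 *: E p0 - G x by rewrite U_def E2_def GF_def.
have E0 : E p0 = be c p0 *: L by rewrite E_def.
have kE : kphi p0 = hq (U p0) - 4^-1 * sq (E p0).
  by rewrite kphi_def hU_def sE4_def sE_def.
have [dF1 eF1] : differentiable F1 p0 /\ 'd F1 p0 = (fun q => 'd f x q.1) :> (_ -> _).
  rewrite F1_def; exact: (comp_fst_diff (R := R) (m := m) (hf.1 x) (p := p0)).
have [dGF eGF] : differentiable GF p0 /\ 'd GF p0 = (fun q => 'd G x q.1) :> (_ -> _).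
  rewrite GF_def; exact: (comp_fst_diff (R := R) (m := m) (hG.1 x) (p := p0)).
have dAl : differentiable (al c) p0 := (ha c c0).1.1 p0.
have dBe : differentiable (be c) p0 := (ha c c0).2.1 p0.
have dga : differentiable ga p0 := hga.1 p0.
have dE : differentiable E p0 by rewrite E_def; exact: scal_diff.
have dE2 : differentiable E2 p0 by rewrite E2_def; exact: differentiableZ.
have dU : differentiable U p0 by rewrite U_def; exact: differentiableB.
have dhq := hq_diff (U p0).
have dsq := sq_diff (E p0).
have dhU : differentiable hU p0 by rewrite hU_def; exact: differentiable_comp dU dhq.1.
have dsE : differentiable sE p0 by rewrite sE_def; exact: differentiable_comp dE dsq.1.
have dsE4 : differentiable sE4 p0 by rewrite sE4_def; exact: differentiableZ.
have dk : differentiable kphi p0 by rewrite kphi_def; exact: differentiableB.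
have dAk : differentiable Ak p0 by rewrite Ak_def; exact: differentiableM.
have dS1 : differentiable S1 p0 by rewrite S1_def; exact: differentiableD.
have dAcal : differentiable (Acal f G al be ga c) p0 by rewrite AcalE; exact: differentiableD.
have eA1 : 'd (S1 + ga) p0 = 'd S1 p0 \+ 'd ga p0 :> (_ -> _) := diffD dS1 dga.
have eA2 : 'd S1 p0 = 'd F1 p0 \+ 'd Ak p0 :> (_ -> _).
  by move: dS1; rewrite S1_def => _; exact: diffD.
have eA3 : 'd Ak p0 = al c p0 \*: 'd kphi p0 \+ kphi p0 \*: 'd (al c) p0 :> (_ -> _).
  by move: dAk; rewrite Ak_def => _; exact: diffM.
have ek : 'd kphi p0 = 'd hU p0 \- 'd sE4 p0 :> (_ -> _).
  by move: dk; rewrite kphi_def => _; exact: diffB.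
have ehU : 'd hU p0 = 'd (@hq R m) (U p0) \o 'd U p0 :> (_ -> _).
  by move: dhU; rewrite hU_def => _; exact: diff_comp dU dhq.1.
have esE4 : 'd sE4 p0 = 4^-1 \*: 'd sE p0 :> (_ -> _).
  by move: dsE4; rewrite sE4_def => _; exact: diffZ.
have esE : 'd sE p0 = 'd (@sq R m) (E p0) \o 'd E p0 :> (_ -> _).
  by move: dsE; rewrite sE_def => _; exact: diff_comp dE dsq.1.
have eU : 'd U p0 = 'd E2 p0 \- 'd GF p0 :> (_ -> _).
  by move: dU; rewrite U_def => _; exact: diffB.
have eE2 : 'd E2 p0 = 2^-1 \*: 'd E p0 :> (_ -> _).
  by move: dE2; rewrite E2_def => _; exact: diffZ.
have eAc : 'd (Acal f G al be ga c) p0 = 'd S1 p0 \+ 'd ga p0 :> (_ -> _).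
  by rewrite AcalE; exact: eA1.
have sG : (G x)^T = G x := hsym x.
have sL : L^T = L := proj1 pL.
have ipLG : ip L (G x) = 0 by apply: psd_ip_jordan.
have P0 : psd_proj (U p0) = 2^-1 *: E p0.
  apply: (proj_uniq (psd_projP (U p0))); split.
    by rewrite E0; apply: psdZ; rewrite ?invr_ge0 ?ler0n //; apply: psdZ => //; exact: ltW.
  move=> Z pZ; rewrite frob_le U0.
  have -> : 2^-1 *: E p0 - G x - 2^-1 *: E p0 = - G x.
    by apply/matrixP => i j; rewrite !mxE; ring.
  have -> : 2^-1 *: E p0 - G x - Z = (2^-1 *: E p0 - Z) - G x.
    by apply/matrixP => i j; rewrite !mxE; ring.
  rewrite sqN sqB ipBl E0 ipZl ipZl ipLG !mulr0 sub0r.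
  have h1 := ip_psd_ge0 pG pZ; rewrite ipC in h1.
  have h2 := sq_ge0 (2^-1 *: (be c p0 *: L) - Z).
  lra.
have gradE : forall v, 'd f x v = ip L ('d G x v).
  move=> v.
  have hg : forall i, 'd f x (evec R i) = ip L ('d G x (evec R i)).
    move=> i; move/eqP: hgrad; rewrite /gradL subr_eq0 => /eqP hg.
    have := congr1 (fun r : 'rV[R]_n => r 0 i) hg; rewrite !mxE => ->.
    by rewrite ipC ip_tr sL.
  rewrite [v]row_sum_delta !linear_sum ip_sumr; apply: eq_bigr => i _.
  by rewrite !linearZ /= ipZr -hg.
have key : forall w, ipl (psd_proj (U p0)) ('d U p0 w) - 4^-1 * ipl (E p0) ('d E p0 w)
    = - (be c p0 * ip L ('d G x w.1)).
  move=> w.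
  have pU : 'd U p0 w = 'd E2 p0 w - 'd GF p0 w := congr1 (fun F => F w) eU.
  have pE2 : 'd E2 p0 w = 2^-1 *: 'd E p0 w := congr1 (fun F => F w) eE2.
  have pGF : 'd GF p0 w = 'd G x w.1 := congr1 (fun F => F w) eGF.
  have h1 : ipl (psd_proj (U p0)) ('d U p0 w) =
      ipl (2^-1 *: E p0) (2^-1 *: 'd E p0 w - 'd G x w.1)
    := f_equal2 (@ipl R m) P0 (etrans pU (f_equal2 (fun a b => a - b) pE2 pGF)).
  apply: etrans (congr1 (fun t => t - 4^-1 * ipl (E p0) ('d E p0 w)) h1) _.
  exact: key_alg E0.
have k0 : kphi p0 = 0.
  by rewrite kE /hq P0 sqZ; field.
have dAw : forall w, 'd ga p0 w = 0 -> 'd (Acal f G al be ga c) p0 w = 0.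
  move=> w hgw.
  have pAc : 'd (Acal f G al be ga c) p0 w = 'd S1 p0 w + 'd ga p0 w
    := congr1 (fun F => F w) eAc.
  have pA2 : 'd S1 p0 w = 'd F1 p0 w + 'd Ak p0 w := congr1 (fun F => F w) eA2.
  have pA3 : 'd Ak p0 w = al c p0 * 'd kphi p0 w + kphi p0 * 'd (al c) p0 w
    := congr1 (fun F => F w) eA3.
  have pk : 'd kphi p0 w = 'd hU p0 w - 'd sE4 p0 w := congr1 (fun F => F w) ek.
  have phU : 'd hU p0 w = ipl (psd_proj (U p0)) ('d U p0 w)
    := etrans (congr1 (fun F => F w) ehU) (congr1 (fun F => F ('d U p0 w)) dhq.2).
  have psE4 : 'd sE4 p0 w = 4^-1 * 'd sE p0 w := congr1 (fun F => F w) esE4.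
  have psE : 'd sE p0 w = ipl (E p0) ('d E p0 w)
    := etrans (congr1 (fun F => F w) esE) (congr1 (fun F => F ('d E p0 w)) dsq.2).
  have pF1 : 'd F1 p0 w = ip L ('d G x w.1)
    := etrans (congr1 (fun F => F w) eF1) (gradE w.1).
  exact: (fin_alg pAc pA2 pA3 pk phU psE4 psE (key w) pF1 k0 (hab c c0) hgw).
split; first exact: dAcal.
split; first by move=> v; apply: dAw; apply: gav.
split; first by move=> H sH; apply: dAw; apply: gaH.
have -> : Acal f G al be ga c (x, L) = F1 p0 + Ak p0 + ga p0.
  by rewrite AcalE S1_def.
have -> : Ak p0 = al c p0 * kphi p0 by rewrite Ak_def.
by rewrite k0 mulr0 addr0 ga0 addr0 F1_def.
Qed.
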